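(* Let $P_0(k)=C_{p0}T_{p0}^k-C_mT_m^k$ with $C_{p0},C_m>0$ and $0<T_{p0}<T_m<1$, and let $C_{pi}>0$ and $0<T_{pi}<T_m$, $i=1,\dots,N$. Then there exist positive numbers $C_{m0},\dots,C_{mN}$ with $\sum_{i=0}^N C_{mi}=C_m$ such that the functions $L_i(k)=C_{pi}T_{pi}^k-C_{mi}T_m^k$, $i=0,\dots,N$, all attain their minimum at one common point $k_1$ (i.e. $L_i'(k_1)=0$ for all $i$), and $P_0(k)+\sum_{i=1}^N C_{pi}T_{pi}^k=\sum_{i=0}^N L_i(k)$ for all real $k$. *)

(* Defs.v *)
(* concrete reals R; T^k for T>0 is Rpower T k = exp (k * ln T). *)
From Stdlib Require Export Reals.
Open Scope R_scope.

Fixpoint sum_from1 (f : nat -> R) (N : nat) : R :=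
  match N with
  | O => 0
  | S n => sum_from1 f n + f (S n)
  end.

Definition P0 (Cp0 Tp0 Cm Tm : R) (k : R) : R :=
  Cp0 * Rpower Tp0 k - Cm * Rpower Tm k.

Definition Lfun (Cpi Tpi Cmi Tm : R) (k : R) : R :=
  Cpi * Rpower Tpi k - Cmi * Rpower Tm k.

(* Main.v *)
Require Import Defs.
From Stdlib Require Import Reals Lra Lia.
Open Scope R_scope.

Lemma dexp (a x : R) : derivable_pt_lim (fun k => exp (k * a)) x (a * exp (x * a)).
Proof.
  assert (H1 : derivable_pt_lim (fun k => k * a) x a).
  { assert (H := derivable_pt_lim_mult id (fct_cte a) x 1 0
                   (derivable_pt_lim_id x) (derivable_pt_lim_const a x)).
    unfold id, fct_cte in H. assert (E : 1 * a + x * 0 = a) by ring.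
    rewrite E in H. exact H. }
  assert (H := derivable_pt_lim_comp (fun k => k * a) exp x a (exp (x * a)) H1
                 (derivable_pt_lim_exp (x * a))).
  replace (a * exp (x * a)) with (exp (x * a) * a) by ring. exact H.
Qed.

Lemma dterm (w a x : R) :
  derivable_pt_lim (fun k => w * exp (k * a)) x (w * (a * exp (x * a))).
Proof.
  exact (derivable_pt_lim_scal (fun k => exp (k * a)) w x _ (dexp a x)).
Qed.

Lemma dL (C T c Tm x : R) :
  derivable_pt_lim (Lfun C T c Tm) x
    (C * (ln T * exp (x * ln T)) - c * (ln Tm * exp (x * ln Tm))).
Proof.
  unfold Lfun, Rpower.
  exact (derivable_pt_lim_minus (fun k => C * exp (k * ln T))
           (fun k => c * exp (k * ln Tm)) x _ _ (dterm C (ln T) x) (dterm c (ln Tm) x)).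
Qed.

Lemma cont_sum (w d : nat -> R) (n : nat) :
  continuity (fun k => sum_f_R0 (fun i => w i * exp (k * d i)) n).
Proof.
  induction n as [|n IH]; simpl.
  - intro x. apply derivable_continuous_pt. exists (w 0%nat * (d 0%nat * exp (x * d 0%nat))).
    apply dterm.
  - apply (continuity_plus _ (fun k => w (S n) * exp (k * d (S n)))); auto.
    intro x. apply derivable_continuous_pt. eexists. apply dterm.
Qed.

Lemma term_small (w d eps : R) : 0 < w -> d < 0 -> 0 < eps ->
  exists K, forall k, K <= k -> w * exp (k * d) < eps.
Proof.
  intros Hw Hd He. exists ((ln eps - ln w) / d + 1). intros k Hk.
  assert (E : ((ln eps - ln w) / d + 1) * d = ln eps - ln w + d) by (field; lra).
  assert (H1 : k * d <= ((ln eps - ln w) / d + 1) * d) by nra.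
  assert (H2 : exp (k * d) < exp (ln eps + - ln w)) by (apply exp_increasing; lra).
  rewrite exp_plus, exp_Ropp, !exp_ln in H2 by lra.
  replace eps with (w * (eps * / w)) by (field; lra).
  apply Rmult_lt_compat_l; lra.
Qed.

Lemma sum_small (w d : nat -> R) (n : nat) :
  (forall i, (i <= n)%nat -> 0 < w i /\ d i < 0) -> forall eps, 0 < eps ->
  exists K, forall k, K <= k -> sum_f_R0 (fun i => w i * exp (k * d i)) n < eps.
Proof.
  induction n as [|n IH]; intros H eps He; simpl.
  - destruct (H 0%nat ltac:(lia)). apply term_small; auto.
  - destruct (IH ltac:(intros; apply H; lia) (eps/2) ltac:(lra)) as [K1 HK1].
    destruct (H (S n) ltac:(lia)).
    destruct (term_small (w (S n)) (d (S n)) (eps/2)) as [K2 HK2]; auto; try lra.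
    exists (Rmax K1 K2). intros k Hk.
    assert (A := HK1 k ltac:(pose proof (Rmax_l K1 K2); lra)).
    assert (B := HK2 k ltac:(pose proof (Rmax_r K1 K2); lra)). lra.
Qed.

Lemma sum_ge_first (f : nat -> R) (n : nat) :
  (forall i, (i <= n)%nat -> 0 <= f i) -> f 0%nat <= sum_f_R0 f n.
Proof.
  induction n as [|n IH]; intros H; simpl. lra.
  assert (H1 := IH ltac:(intros; apply H; lia)). assert (H2 := H (S n) ltac:(lia)). lra.
Qed.

Lemma sum_split (f : nat -> R) (N : nat) : sum_f_R0 f N = f 0%nat + sum_from1 f N.
Proof. induction N as [|N IH]; simpl. ring. rewrite IH. ring. Qed.

Theorem corollary2 (N : nat) (Cp Tp : nat -> R) (Cm Tm : R) :
  0 < Cp 0%nat -> 0 < Cm -> 0 < Tp 0%nat -> Tp 0%nat < Tm -> Tm < 1 ->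
  (forall i : nat, (1 <= i <= N)%nat -> 0 < Cp i /\ 0 < Tp i /\ Tp i < Tm) ->
  exists Cmi : nat -> R,
    (forall i : nat, (i <= N)%nat -> 0 < Cmi i) /\
    sum_f_R0 Cmi N = Cm /\
    (exists k1 : R,
       forall i : nat, (i <= N)%nat ->
         derivable_pt_lim (Lfun (Cp i) (Tp i) (Cmi i) Tm) k1 0 /\
         (forall k : R, Lfun (Cp i) (Tp i) (Cmi i) Tm k1
                        <= Lfun (Cp i) (Tp i) (Cmi i) Tm k)) /\
    (forall k : R,
       P0 (Cp 0%nat) (Tp 0%nat) Cm Tm k
         + sum_from1 (fun i => Cp i * Rpower (Tp i) k) N
       = sum_f_R0 (fun i => Lfun (Cp i) (Tp i) (Cmi i) Tm k) N).
Proof.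
  intros HC0 HCm HT0 HT0m HTm1 Hi.
  assert (Hall : forall i, (i <= N)%nat -> 0 < Cp i /\ 0 < Tp i /\ Tp i < Tm).
  { intros i Hi'. destruct i. auto. apply Hi. lia. }
  set (v := ln Tm).
  assert (Hv : v < 0).
  { unfold v. rewrite <- ln_1. apply ln_increasing; lra. }
  set (u := fun i => ln (Tp i)).
  assert (Hu : forall i, (i <= N)%nat -> u i < v).
  { intros i Hi'. destruct (Hall i Hi') as (?&?&?). unfold u, v. apply ln_increasing; lra. }
  set (w := fun i => Cp i * u i / v).
  set (d := fun i => u i - v).
  assert (Hwd : forall i, (i <= N)%nat -> 0 < w i /\ d i < 0).
  { intros i Hi'. assert (H1 := Hu i Hi'). destruct (Hall i Hi') as (?&?&?).
    unfold w, d. split; [|lra].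
    replace (Cp i * u i / v) with (Cp i * (- u i) * / (- v)) by (field; lra).
    apply Rmult_lt_0_compat; [apply Rmult_lt_0_compat|apply Rinv_0_lt_compat]; lra. }
  set (g := fun k => sum_f_R0 (fun i => w i * exp (k * d i)) N).
  destruct (Hwd 0%nat ltac:(lia)) as [Hw0 Hd0].
  set (a := (ln Cm - ln (w 0%nat)) / d 0%nat - 1).
  assert (Ha : Cm < g a).
  { assert (E : a * d 0%nat = ln Cm + - ln (w 0%nat) - d 0%nat) by (unfold a; field; lra).
    assert (H2 : exp (ln Cm + - ln (w 0%nat)) < exp (a * d 0%nat)) by (apply exp_increasing; lra).
    rewrite exp_plus, exp_Ropp, !exp_ln in H2 by lra.
    assert (H3 : Cm < w 0%nat * exp (a * d 0%nat)).
    { replace Cm with (w 0%nat * (Cm * / w 0%nat)) by (field; lra).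
      apply Rmult_lt_compat_l; lra. }
    assert (H4 := sum_ge_first (fun i => w i * exp (a * d i)) N).
    simpl in H4. unfold g. apply Rlt_le_trans with (1 := H3). apply H4.
    intros i Hi'. destruct (Hwd i Hi'). pose proof (exp_pos (a * d i)). nra. }
  destruct (sum_small w d N Hwd Cm HCm) as [b Hb].
  set (b' := Rmax b (a + 1)).
  assert (Hb' : g b' < Cm) by (apply Hb; apply Rmax_l).
  assert (Hab : a < b') by (pose proof (Rmax_r b (a+1)); unfold b'; lra).
  assert (Hc : continuity (fun k => Cm - g k)).
  { intro x. apply (continuity_pt_minus (fct_cte Cm) g).
    apply continuity_pt_const. intros ? ?; reflexivity. apply cont_sum. }
  destruct (IVT (fun k => Cm - g k) a b' Hc Hab ltac:(lra) ltac:(lra)) as [k1 [_ Hk1]].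
  set (Cmi := fun i => w i * exp (k1 * d i)).
  exists Cmi. split; [|split; [|split]].
  - intros i Hi'. destruct (Hwd i Hi'). unfold Cmi. pose proof (exp_pos (k1 * d i)). nra.
  - unfold Cmi. unfold g in Hk1. lra.
  - exists k1. intros i Hi'.
    destruct (Hall i Hi') as (HC&HT&HTT). assert (Hui := Hu i Hi').
    assert (HD : forall x, Cp i * (ln (Tp i) * exp (x * ln (Tp i))) - Cmi i * (ln Tm * exp (x * ln Tm))
                  = Cp i * u i * exp (x * v) * (exp (x * d i) - exp (k1 * d i))).
    { intro x. fold v. change (ln (Tp i)) with (u i).
      assert (E : exp (x * u i) = exp (x * d i) * exp (x * v)).
      { rewrite <- exp_plus. f_equal. unfold d. ring. }
      rewrite E. unfold Cmi, w. field. lra. }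
    split.
    + assert (H := dL (Cp i) (Tp i) (Cmi i) Tm k1). rewrite HD in H.
      replace (Cp i * u i * exp (k1 * v) * (exp (k1 * d i) - exp (k1 * d i))) with 0 in H by ring.
      exact H.
    + intro k. destruct (Hwd i Hi') as [_ Hdi].
      assert (Hcu : Cp i * u i < 0) by (assert (u i < 0) by lra; nra).
      destruct (Rtotal_order k1 k) as [Hlt|[Heq|Hgt]].
      * destruct (MVT_cor2 (Lfun (Cp i) (Tp i) (Cmi i) Tm) _ k1 k Hlt
                   (fun c _ => dL (Cp i) (Tp i) (Cmi i) Tm c)) as [c [Hc1 Hc2]].
        rewrite HD in Hc1.
        assert (exp (c * d i) < exp (k1 * d i)) by (apply exp_increasing; nra).
        pose proof (exp_pos (c * v)).
        assert (0 < - (Cp i * u i) * exp (c * v)) by nra.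
        assert (0 <= (- (Cp i * u i) * exp (c * v)) * (exp (k1 * d i) - exp (c * d i)) * (k - k1)).
        { apply Rmult_le_pos; [apply Rmult_le_pos|]; lra. }
        assert (Cp i * u i * exp (c * v) * (exp (c * d i) - exp (k1 * d i)) * (k - k1) =
          (- (Cp i * u i) * exp (c * v)) * (exp (k1 * d i) - exp (c * d i)) * (k - k1)) by ring.
        lra.
      * subst; lra.
      * destruct (MVT_cor2 (Lfun (Cp i) (Tp i) (Cmi i) Tm) _ k k1 Hgt
                   (fun c _ => dL (Cp i) (Tp i) (Cmi i) Tm c)) as [c [Hc1 Hc2]].
        rewrite HD in Hc1.
        assert (exp (k1 * d i) < exp (c * d i)) by (apply exp_increasing; nra).
        pose proof (exp_pos (c * v)).
        assert (0 < - (Cp i * u i) * exp (c * v)) by nra.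
        assert (0 <= (- (Cp i * u i) * exp (c * v)) * (exp (c * d i) - exp (k1 * d i)) * (k1 - k)).
        { apply Rmult_le_pos; [apply Rmult_le_pos|]; lra. }
        assert (Cp i * u i * exp (c * v) * (exp (c * d i) - exp (k1 * d i)) * (k1 - k) =
          - ((- (Cp i * u i) * exp (c * v)) * (exp (c * d i) - exp (k1 * d i)) * (k1 - k))) by ring.
        lra.
  - intros k. unfold Lfun. rewrite minus_sum, <- scal_sum, (sum_split (fun i => Cp i * Rpower (Tp i) k)).
    unfold P0. assert (Hs : sum_f_R0 Cmi N = Cm) by (unfold Cmi; unfold g in Hk1; lra).
    rewrite Hs. ring.
Qed.
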